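(* Let $\beta=0$, $R\ge0$, and let $D\ge4$ be even. For $n>0$ let $\alpha_\infty^n$ be the maximum value of $\alpha_0$ over all numerical walls for the Chern character $(-R,0,n,0)$ on $\mathbb{P}^3$. Then $\alpha_\infty^D=\alpha_\infty^{D-1}$. In particular, $D-2<\alpha_\infty^D\le D-1$.
   Context: On $\mathbb{P}^3$ with hyperplane class $H$, Chern characters are the vectors of coefficients of $1,H,H^2,H^3$. For $v=(-R,0,n,0)$ and the Bayer–Macrì–Toda stability conditions $\sigma_{0,\alpha,s}$ ($\alpha,s>0$; central charge $Z=-(\operatorname{ch}_3-(s+\frac16)\alpha^2\operatorname{ch}_1)+\sqrt{-1}(\operatorname{ch}_2-\frac{\alpha^2}{2}\operatorname{ch}_0)$), a numerical wall is a curve $(s+\frac16)\alpha^2=\alpha_0^2/6$ with $\alpha_0^2=6e/c$, where $(r,c,d,e)=\operatorname{ch}(A)$ for some $A\in D^b(\mathbb{P}^3)$ with $c>0$ satisfying $0<d<n$, $0<c(6e)\le\min\{4d^2,4(n-d)^2\}$, and $-\frac{c(2n-2d)}{6e}-R\le r\le\frac{2cd}{6e}$. *)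

(* Defs.v *)
From Stdlib Require Import Reals ZArith.
Open Scope R_scope.

(* Chern character of the line bundle O(k) on P^3, as the vector of
   coefficients of 1, H, H^2, H^3. *)
Definition ch_O (k : Z) : R * R * R * R :=
  (1, IZR k, IZR k ^ 2 / 2, IZR k ^ 3 / 6).

(* (r,c,d,e) is the Chern character of some object A of D^b(P^3).
   The image of ch : K_0(D^b(P^3)) -> Q^4 is the Z-span of
   ch(O), ch(O(1)), ch(O(2)), ch(O(3)) (Beilinson: these generate K_0(P^3)). *)
Definition is_ch_P3 (r c d e : R) : Prop :=
  exists a0 a1 a2 a3 : Z,
    let '(r0, c0, d0, e0) := ch_O 0 in
    let '(r1, c1, d1, e1) := ch_O 1 in
    let '(r2, c2, d2, e2) := ch_O 2 in
    let '(r3, c3, d3, e3) := ch_O 3 in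
    r = IZR a0 * r0 + IZR a1 * r1 + IZR a2 * r2 + IZR a3 * r3 /\
    c = IZR a0 * c0 + IZR a1 * c1 + IZR a2 * c2 + IZR a3 * c3 /\
    d = IZR a0 * d0 + IZR a1 * d1 + IZR a2 * d2 + IZR a3 * d3 /\
    e = IZR a0 * e0 + IZR a1 * e1 + IZR a2 * e2 + IZR a3 * e3.

(* alpha0 > 0 gives a numerical wall (s + 1/6) alpha^2 = alpha0^2 / 6 for
   v = (-Rk, 0, n, 0): alpha0^2 = 6e/c for some ch(A) = (r,c,d,e) satisfying
   the conditions of the paper. *)
Definition numerical_wall (Rk n alpha0 : R) : Prop :=
  exists r c d e : R,
    is_ch_P3 r c d e /\
    0 < c /\
    0 < d < n /\
    0 < c * (6 * e) <= Rmin (4 * d ^ 2) (4 * (n - d) ^ 2) /\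
    - (c * (2 * n - 2 * d)) / (6 * e) - Rk <= r <= 2 * c * d / (6 * e) /\
    alpha0 = sqrt (6 * e / c).

Definition is_alpha_inf (Rk n a : R) : Prop :=
  numerical_wall Rk n a /\ (forall b, numerical_wall Rk n b -> b <= a).

(* Main.v *)
Require Import Defs.
From Stdlib Require Import Reals Arith.
From Stdlib Require Import Lra Lia Psatz ZArith.
Open Scope R_scope.


Lemma wall_bound (J q : Z) (Rk n b : R) :
  (2 <= J)%Z -> (3*q <= 2*J*(J-1) <= 3*q+2)%Z -> n <= 2 * IZR J ->
  numerical_wall Rk n b -> b <= sqrt (IZR (6*q+1)).
Proof.
  intros HJ Hq Hn Hw.
  destruct Hw as [r [c [d [e [Hch [Hc [Hd [He [Hr Hb]]]]]]]]].
  destruct Hch as [a0 [a1 [a2 [a3 Hch]]]].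
  cbv beta iota zeta delta [ch_O] in Hch.
  destruct Hch as [Er [Ec [Ed Ee]]].
  assert (Ec' : c = IZR (a1 + 2*a2 + 3*a3)).
  { rewrite Ec, ?plus_IZR, ?mult_IZR. ring. }
  assert (HC : (0 < a1 + 2*a2 + 3*a3)%Z) by (apply lt_IZR; lra).
  assert (Hmin1 : c * (6*e) <= 4 * d^2) by (eapply Rle_trans; [apply He| apply Rmin_l]).
  assert (Hmin2 : c * (6*e) <= 4 * (n-d)^2) by (eapply Rle_trans; [apply He| apply Rmin_r]).
  assert (HJr : 2 <= IZR J) by (apply IZR_le; lia).
  rewrite Hb. apply sqrt_le_1_alt.
  destruct (Z.eq_dec (a1 + 2*a2 + 3*a3) 1) as [H1|H1].
  - assert (a1 = 1 - 2*a2 - 3*a3)%Z by lia. subst a1.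
    rewrite H1 in Ec'.
    assert (Ed' : d = 1/2 + IZR (a2 + 3*a3)).
    { rewrite Ed, ?plus_IZR, ?minus_IZR, ?mult_IZR, ?plus_IZR, ?mult_IZR. field. }
    assert (Ee' : 6 * e = IZR (1 + 6*(a2 + 4*a3))).
    { rewrite Ee, ?plus_IZR, ?minus_IZR, ?mult_IZR, ?plus_IZR, ?mult_IZR. field. }
    set (k := (a2 + 3*a3)%Z) in *.
    set (t := (a2 + 4*a3)%Z) in *.
    assert (H6 : 6*e <= (2*IZR J - 1)^2).
    { destruct (Z_le_gt_dec (2*k+1) (2*J-1)) as [Hk|Hk].
      - assert (IZR k <= IZR J - 1).
        { rewrite <- minus_IZR. apply IZR_le. lia. }
        assert (c = 1) by (rewrite Ec'; reflexivity).
        nra.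
      - assert (IZR J <= IZR k).
        { apply IZR_le. lia. }
        assert (c = 1) by (rewrite Ec'; reflexivity).
        nra. }
    assert (Ht : (1 + 6*t <= (2*J-1)*(2*J-1))%Z).
    { apply le_IZR. rewrite <- Ee'. rewrite mult_IZR, minus_IZR, mult_IZR. lra. }
    assert (t <= q)%Z by nia.
    rewrite Ec'. replace (6*e/1) with (6*e) by field. rewrite Ee'.
    apply IZR_le. lia.
  - assert (HC2 : 2 <= c) by (rewrite Ec'; apply IZR_le; lia).
    assert (HX : 0 < 6*e) by nra.
    assert (Hn0 : 0 < n) by lra.
    assert (A1 : 6*e/c <= c*(6*e)/4).
    { apply Rmult_le_reg_l with (4*c). lra.
      replace (4*c*(6*e/c)) with (4*(6*e)) by (field; lra).
      replace (4*c*(c*(6*e)/4)) with (c*c*(6*e)) by field. nra. }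
    assert (A2 : c*(6*e)/4 <= IZR J * IZR J).
    { destruct (Rle_dec d (n/2)); nra. }
    assert (A3 : (J*J <= 6*q+1)%Z) by nia.
    apply IZR_le in A3. rewrite mult_IZR in A3. lra.
Qed.

Lemma wall_exists (J q : Z) (Rk n : R) :
  (2 <= J)%Z -> (0 <= q)%Z -> (6*q+1 <= (2*J-1)*(2*J-1))%Z -> 0 <= Rk ->
  2 * IZR J - 1 <= n <= 2 * IZR J ->
  numerical_wall Rk n (sqrt (IZR (6*q+1))).
Proof.
  intros HJ Hq0 HqN HRk Hn.
  assert (HJr : 2 <= IZR J) by (apply IZR_le; lia).
  assert (HN0 : 1 <= IZR (6*q+1)) by (apply IZR_le; lia).
  assert (HN : IZR (6*q+1) <= (2*IZR J - 1)^2).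
  { apply IZR_le in HqN. rewrite !mult_IZR, !minus_IZR, mult_IZR in HqN. lra. }
  exists 0, 1, (IZR J - 1/2), (IZR (6*q+1) / 6).
  split.
  { set (a3 := (q - J + 1)%Z).
    set (a2 := (J - 1 - 3*a3)%Z).
    set (a1 := (1 - 2*a2 - 3*a3)%Z).
    exists (- (a1+a2+a3))%Z, a1, a2, a3.
    cbv beta iota zeta delta [ch_O].
    unfold a1, a2, a3.
    repeat first [rewrite plus_IZR | rewrite minus_IZR | rewrite mult_IZR | rewrite opp_IZR].
    repeat split; field. }
  split; [lra|].
  split; [lra|].
  split.
  { split; [lra|]. apply Rmin_glb; nra. }
  split.
  { split.
    - assert (0 < (1 * (2 * n - 2 * (IZR J - 1/2))) / (6 * (IZR (6*q+1) / 6))).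
      { apply Rdiv_lt_0_compat; lra. }
      unfold Rdiv in *. lra.
    - left; apply Rdiv_lt_0_compat; lra. }
  f_equal. field.
Qed.

Theorem lemma4p3 (Rk D : nat) (hD : (4 <= D)%nat) (hDeven : Nat.even D = true) :
  exists a : R,
    is_alpha_inf (INR Rk) (INR D) a /\
    is_alpha_inf (INR Rk) (INR (D - 1)) a /\
    INR D - 2 < a <= INR D - 1.
Proof.
  apply Nat.even_spec in hDeven. destruct hDeven as [j Hj].
  set (J := Z.of_nat j).
  assert (HJ : (2 <= J)%Z) by lia.
  assert (HD : INR D = 2 * IZR J).
  { rewrite Hj, mult_INR, (INR_IZR_INZ j). unfold J. simpl. ring. }
  assert (HD1 : INR (D - 1) = INR D - 1).
  { rewrite minus_INR by lia. simpl. ring. }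
  set (q := (2*J*(J-1) / 3)%Z).
  assert (Hq : (3*q <= 2*J*(J-1) <= 3*q+2)%Z).
  { pose proof (Z.div_mod (2*J*(J-1)) 3 ltac:(lia)).
    pose proof (Z.mod_pos_bound (2*J*(J-1)) 3 ltac:(lia)). unfold q. lia. }
  assert (Hq0 : (0 <= q)%Z) by nia.
  assert (HqN : (6*q+1 <= (2*J-1)*(2*J-1))%Z) by nia.
  assert (HqL : ((2*J-2)*(2*J-2) < 6*q+1)%Z) by nia.
  assert (HRk : 0 <= INR Rk) by apply pos_INR.
  assert (HJr : 2 <= IZR J) by (apply IZR_le; lia).
  exists (sqrt (IZR (6*q+1))).
  split; [|split].
  - split.
    + apply (wall_exists J q); auto; lra.
    + intros b Hb. apply (wall_bound J q (INR Rk) (INR D) b); auto; lra.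
  - split.
    + apply (wall_exists J q); auto; lra.
    + intros b Hb. apply (wall_bound J q (INR Rk) (INR (D-1)) b); auto; lra.
  - rewrite HD. split.
    + apply IZR_lt in HqL. rewrite !mult_IZR, !minus_IZR, mult_IZR in HqL.
      replace (2 * IZR J - 2) with (sqrt ((2 * IZR J - 2)^2)).
      * apply sqrt_lt_1_alt. split; [nra|]. lra.
      * apply sqrt_pow2. lra.
    + apply IZR_le in HqN. rewrite !mult_IZR, !minus_IZR, mult_IZR in HqN.
      replace (2 * IZR J - 1) with (sqrt ((2 * IZR J - 1)^2)).
      * apply sqrt_le_1_alt. lra.
      * apply sqrt_pow2. lra.
Qed.
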